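(* Assume $K_1\subseteq K_2\subseteq\cdots\subseteq K_n\subseteq\mathbb F_q$ are subfields. Let $1\le h\le n$ and $p=\gamma_1X_1+\cdots+\gamma_hX_h+\eta\in\mathbb F_q[X_1,\dots,X_n]$ with $\gamma_1,\dots,\gamma_h,\eta\in\mathbb F_q$ and $\gamma_h\ne 0$, and let $j\in\{1,\dots,n\}$. Then there exists $\varphi\in\mathrm{Aff}(\mathcal X)$ with $X_j\circ\varphi=p$ if and only if $\gamma_i\in K_j$ for all $i\in\{1,\dots,h\}$, $\eta\in K_j$, and $K_h=K_j$.
   Context: $\mathcal X=K_1\times\cdots\times K_n\subseteq\mathbb F_q^n$. $\mathrm{Aff}(\mathbb F_q^n)$ is the group of maps $\boldsymbol\alpha\mapsto A\boldsymbol\alpha+\boldsymbol\beta$ with $A\in GL(n,\mathbb F_q)$, $\boldsymbol\beta\in\mathbb F_q^n$. $\mathrm{Aff}(\mathcal X)$ is the set of maps $\varphi:\mathcal X\to\mathcal X$ of the form $\varphi=\psi|_{\mathcal X}$ with $\psi\in\mathrm{Aff}(\mathbb F_q^n)$ and $\psi(\mathcal X)=\mathcal X$; such $\psi$ is unique. For $f\in\mathbb F_q[X_1,\dots,X_n]$ and $\varphi=\psi|_{\mathcal X}\in\mathrm{Aff}(\mathcal X)$, $f\circ\varphi$ is the polynomial $f(\psi(X_1,\dots,X_n))$, where $(X_1,\dots,X_n)$ is viewed as a column vector. *)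

(* Defs.v *)
From mathcomp Require Import all_boot all_order all_algebra all_field.
From mathcomp Require Import mpoly.
Set Implicit Arguments. Unset Strict Implicit. Unset Printing Implicit Defensive.
Import GRing.Theory.
Local Open Scope ring_scope.

Definition is_subfield (F : finFieldType) (S : {set F}) : Prop :=
  [/\ 0 \in S, 1 \in S, {in S &, forall x y, x - y \in S},
      {in S &, forall x y, x * y \in S} & {in S, forall x, x^-1 \in S}].

(* membership in X = K_0 x ... x K_{n-1}, points of F^n as column vectors *)
Definition inX (F : finFieldType) (n : nat) (K : 'I_n -> {set F}) (x : 'cV[F]_n) : Prop :=
  forall i : 'I_n, x i 0 \in K i.

Definition aff_app (F : finFieldType) (n : nat) (A : 'M[F]_n) (b : 'cV[F]_n) (x : 'cV[F]_n) :=
  A *m x + b.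

Definition aff_preserves (F : finFieldType) (n : nat) (K : 'I_n -> {set F})
  (A : 'M[F]_n) (b : 'cV[F]_n) : Prop :=
  (forall x, inX K x -> inX K (aff_app A b x)) /\
  (forall y, inX K y -> exists x, inX K x /\ aff_app A b x = y).

Definition aff_polys (F : finFieldType) (n : nat) (A : 'M[F]_n) (b : 'cV[F]_n)
  : n.-tuple {mpoly F[n]} :=
  [tuple \sum_(k < n) A i k *: 'X_k + (b i 0)%:MP | i < n].

(* f o phi for phi = psi|_X *)
Definition comp_aff (F : finFieldType) (n : nat) (f : {mpoly F[n]}) (A : 'M[F]_n) (b : 'cV[F]_n)
  : {mpoly F[n]} := f \mPo aff_polys A b.

(* Main.v *)
Require Import Defs.
From mathcomp Require Import all_boot all_order all_algebra all_field.
From mathcomp Require Import mpoly.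
From mathcomp Require Import all_fingroup.
Import GRing.Theory.
Local Open Scope ring_scope.
Set Implicit Arguments. Unset Strict Implicit.

Section Sub.
Variables (F : finFieldType) (S : {set F}) (hS : is_subfield S).
Lemma sf0 : 0 \in S. Proof. by case: hS. Qed.
Lemma sf1 : 1 \in S. Proof. by case: hS. Qed.
Lemma sfB x y : x \in S -> y \in S -> x - y \in S. Proof. by case: hS => _ _ h _ _; apply: h. Qed.
Lemma sfM x y : x \in S -> y \in S -> x * y \in S. Proof. by case: hS => _ _ _ h _; apply: h. Qed.
Lemma sfV x : x \in S -> x^-1 \in S. Proof. by case: hS => _ _ _ _ h; apply: h. Qed.
Lemma sfN x : x \in S -> - x \in S. Proof. by move=> h; rewrite -sub0r; apply: sfB => //; apply: sf0. Qed.
Lemma sfD x y : x \in S -> y \in S -> x + y \in S.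
Proof. by move=> hx hy; rewrite -[y]opprK; apply: sfB => //; apply: sfN. Qed.
Lemma sf_sum (I : finType) (P : pred I) (f : I -> F) :
  (forall i, P i -> f i \in S) -> \sum_(i | P i) f i \in S.
Proof. move=> h; apply: (big_ind (fun x => x \in S)) => //; [exact: sf0 | exact: sfD]. Qed.
End Sub.

Lemma coef_lin (F : finFieldType) n (c : 'I_n -> F) (d : F) (k : 'I_n) :
  (\sum_(i < n) c i *: ('X_i : {mpoly F[n]}) + d%:MP)@_U_(k) = c k /\
  (\sum_(i < n) c i *: ('X_i : {mpoly F[n]}) + d%:MP)@_0%MM = d.
Proof.
have h0 : (U_(k)%MM == 0%MM :> 'X_{1..n}) = false.
  apply/negP => /eqP /(congr1 (fun m : 'X_{1..n} => m k)).
  by rewrite mnm1E mnm0E eqxx.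
rewrite !mcoeffD !raddf_sum /= !mcoeffC h0 eqxx mulr0 mulr1 addr0; split.
  rewrite (bigD1 k) //= big1 ?addr0; first by rewrite mcoeffZ mcoeffXU eqxx mulr1.
  by move=> i /negbTE ik; rewrite mcoeffZ mcoeffXU ik mulr0.
rewrite big1 ?add0r // => i _; rewrite mcoeffZ.
have hi : (U_(i)%MM == 0%MM :> 'X_{1..n}) = false.
  apply/negP => /eqP /(congr1 (fun m : 'X_{1..n} => m i)).
  by rewrite mnm1E mnm0E eqxx.
by rewrite mcoeffX hi mulr0.
Qed.

Lemma comp_affE (F : finFieldType) n (j : 'I_n) A (b : 'cV[F]_n) :
  comp_aff 'X_j A b = \sum_(k < n) A j k *: 'X_k + (b j 0)%:MP.
Proof. by rewrite /comp_aff comp_mpolyXU /aff_polys -tnth_nth tnth_mktuple. Qed.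

Lemma zero_pat (F : finFieldType) n (K : 'I_n -> {set F}) (hK : forall i, is_subfield (K i))
  (M : 'M[F]_n) (c : 'cV[F]_n) :
  (forall x, inX K x -> inX K (M *m x + c)) ->
  (forall i, c i 0 \in K i) /\ (forall i k t, t \in K k -> M i k * t \in K i).
Proof.
move=> h.
have hc : forall i, c i 0 \in K i.
  move=> i; have := h 0 _ i; rewrite mulmx0 add0r; apply.
  by move=> l; rewrite mxE; apply: sf0.
split=> // i k t tK.
have := h (t *: delta_mx k 0) _ i.
rewrite -scalemxAr -colE !mxE => H.
have -> : M i k * t = (t * M i k + c i 0) - c i 0 by rewrite addrK mulrC.
apply: sfB => //; apply: H.
move=> l; rewrite !mxE; case: (l =P k) => [->|_] /=; first by rewrite mulr1.
by rewrite mulr0; apply: sf0.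

Qed.

Lemma zero_pat2 (F : finFieldType) n (K : 'I_n -> {set F}) (hK : forall i, is_subfield (K i))
  (M : 'M[F]_n) (c : 'cV[F]_n) :
  (forall x, inX K x -> inX K (M *m x + c)) ->
  forall i k, M i k != 0 -> K k \subset K i.
Proof.
move=> /(zero_pat hK) [_ h] i k nz; apply/subsetP => t tK.
have h1 := h i k 1 (sf1 (hK k)); rewrite mulr1 in h1.
have -> : t = (M i k)^-1 * (M i k * t) by rewrite mulrA mulVf // mul1r.
by apply: (sfM (hK i)); [apply: (sfV (hK i)) | apply: h].
Qed.

Lemma surj_aff (F : finFieldType) n (K : 'I_n -> {set F}) (A : 'M[F]_n) (b : 'cV[F]_n) :
  A \in unitmx -> (forall x, inX K x -> inX K (aff_app A b x)) -> aff_preserves K A b.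
Proof.
move=> uA h; split=> // y yX.
pose S := [set x : 'cV[F]_n | [forall i, x i 0 \in K i]].
have inS x : (x \in S) <-> inX K x.
  by rewrite inE; split => [/forallP|H]; last apply/forallP.
have inj : injective (aff_app A b).
  move=> x1 x2; rewrite /aff_app => /addIr /(congr1 (mulmx (invmx A))).
  by rewrite !mulmxA mulVmx // !mul1mx.
have sub : aff_app A b @: S \subset S.
  by apply/subsetP => z /imsetP [x /inS xS ->]; apply/inS; apply: h.
have eqS : aff_app A b @: S = S.
  by apply/eqP; rewrite eqEcard sub (card_imset _ inj) leqnn.
have : y \in aff_app A b @: S by rewrite eqS; apply/inS.
by case/imsetP => x /inS xS ->; exists x.
Qed.

Theorem mainTheorem8 (F : finFieldType) (n : nat) (K : 'I_n -> {set F})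
  (hK : forall i, is_subfield (K i))
  (hchain : forall i i' : 'I_n, (i <= i')%N -> K i \subset K i')
  (hh : 'I_n) (gamma : 'I_n -> F) (eta : F) (hgam : gamma hh != 0)
  (j : 'I_n) :
  let p : {mpoly F[n]} := \sum_(k < n | (k <= hh)%N) gamma k *: 'X_k + eta%:MP in
  (exists (A : 'M[F]_n) (b : 'cV[F]_n),
     [/\ A \in unitmx, aff_preserves K A b & comp_aff 'X_j A b = p])
  <->
  [/\ forall k : 'I_n, (k <= hh)%N -> gamma k \in K j, eta \in K j & K hh = K j].
Proof.
move=> p.
have hp : p = \sum_(k < n) (if (k <= hh)%N then gamma k else 0) *: 'X_k + eta%:MP.
  rewrite /p big_mkcond; congr (_ + _); apply: eq_bigr => k _.
  by case: ifP => _ //; rewrite scale0r.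
split.
- case=> A [b [uA [pres surj] hcomp]].
  rewrite comp_affE hp in hcomp.
  have hA : forall k, A j k = if (k <= hh)%N then gamma k else 0.
    move=> k; have [h1 _] := coef_lin (fun k => A j k) (b j 0) k.
    have [h2 _] := coef_lin (fun k => if (k <= hh)%N then gamma k else 0) eta k.
    by rewrite -h1 -h2 hcomp.
  have hb : b j 0 = eta.
    have [_ h1] := coef_lin (fun k => A j k) (b j 0) j.
    have [_ h2] := coef_lin (fun k => if (k <= hh)%N then gamma k else 0) eta j.
    by rewrite -h1 -h2 hcomp.
  have [hc hM] := zero_pat hK pres.
  split.
  + move=> k hk; have := hM j k 1 (sf1 (hK k)).
    by rewrite mulr1 hA hk.
  + by rewrite -hb; apply: hc.
  apply/eqP; rewrite eqEsubset; apply/andP; split.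
    by apply: (zero_pat2 hK pres); rewrite hA leqnn.
  pose B := invmx A; pose c := - (B *m b).
  have presB : forall y, inX K y -> inX K (B *m y + c).
    move=> y /surj [x [xX Hx]].
    by rewrite -Hx /aff_app /c mulmxDr mulmxA mulVmx // mul1mx addrK.
  have e := congr1 (fun M : 'M[F]_n => M j j) (mulmxV uA).
  rewrite /= !mxE eqxx /= in e.
  case: (pickP (fun k => A j k * invmx A k j != 0)) => [k nz | none]; last first.
    rewrite big1 in e; first by move/eqP: e; rewrite eq_sym oner_eq0.
    by move=> k _; apply/eqP; rewrite -[_ == 0]negbK none.
  move: nz; rewrite mulf_eq0 negb_or => /andP [nA nB].
  have hk : (k <= hh)%N by move: nA; rewrite hA; case: ifP => // _; rewrite eqxx.
  apply: subset_trans (hchain _ _ hk).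
  exact: (zero_pat2 hK presB).
- case=> hg he hKe.
  pose s := tperm j hh.
  pose T := ((\matrix_(i, k) if i == hh then (if (k <= hh)%N then gamma k else 0)
                                     else (i == k)%:R) : 'M[F]_n).
  pose bT := (\col_i (if i == hh then eta else 0) : 'cV[F]_n).
  have uA : row_perm s T \in unitmx.
    rewrite row_permE unitmx_mul unitmx_perm /= unitmxE det_trig; last first.
      apply/is_trig_mxP => i k lt; rewrite mxE; case: eqP => [ei|ne].
        by rewrite -ei leqNgt lt.
      suff /negbTE -> : i != k by [].
      by apply/eqP => ik; move: lt; rewrite ik ltnn.
    rewrite (bigD1 hh) //= big1 ?mulr1; first by rewrite mxE eqxx leqnn unitfE.
    by move=> i /negbTE ne; rewrite mxE ne eqxx.
  exists (row_perm s T), (row_perm s bT); split => //.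
  + apply: surj_aff => // x xX i.
    have gen : forall i', (T *m x + bT) i' 0 \in K i'.
      move=> i'; rewrite !mxE; case: eqP => [->|ne].
        apply: (sfD (hK hh)); last by rewrite hKe.
        apply: sf_sum => // k _; rewrite !mxE eqxx.
        case: ifP => hk; last by rewrite mul0r; apply: sf0.
        apply: (sfM (hK hh)); first by rewrite hKe; apply: hg.
        exact: (subsetP (hchain _ _ hk)).
      rewrite addr0 (bigD1 i') //= big1 ?addr0.
        by rewrite !mxE (introF eqP ne) eqxx mul1r; apply: xX.
      by move=> k /negbTE nk; rewrite !mxE (introF eqP ne) eq_sym nk mul0r.
    rewrite /aff_app !row_permE -mulmxA -mulmxDr -row_permE mxE.
    have -> : K i = K (s i).
      by rewrite /s; case: tpermP => [->|->|].
    exact: gen.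
  + rewrite comp_affE /p; congr (_ + _).
      rewrite [RHS]big_mkcond; apply: eq_bigr => k _.
      rewrite !mxE tpermL eqxx; case: ifP => _ //; by rewrite scale0r.
    by rewrite !mxE tpermL eqxx.
Qed.
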